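(* Let $a,b$ be integers with $b>a>2$ and $\gcd(a,b)=1$. Then for every integer $c\geq (a-1)(b-1)$ there exists a tame polynomial automorphism $F$ of $\mathbb{C}^3$ with $\operatorname{mdeg}F=(a,b,c)$.
   Context: For a polynomial automorphism $F=(F_1,\ldots,F_n)$ of $\mathbb{C}^n$, its multidegree is $\operatorname{mdeg}F:=(\deg F_1,\ldots,\deg F_n)$, where $\deg$ is total degree. A map $F=(F_1,\ldots,F_n)$ is elementary if for some $j\leq n$ and some polynomial $g$ in $n-1$ variables, $F_j=X_j+g(X_1,\ldots,\widehat{X_j},\ldots,X_n)$ and $F_i=X_i$ for $i\neq j$. A polynomial automorphism is tame if it is a composition of invertible affine-linear maps and elementary maps. *)

(* Defs.v *)
(* Polynomials in 3 variables X1 X2 X3 over algC, encoded as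
   nested univariate polynomials: {poly {poly {poly algC}}}, with
   X1 = innermost variable, X2 = middle, X3 = outermost. *)
From HB Require Import structures.
From mathcomp Require Import all_boot all_order all_algebra all_field.
Set Implicit Arguments. Unset Strict Implicit. Unset Printing Implicit Defensive.
Import Order.TTheory GRing.Theory Num.Theory.
Local Open Scope ring_scope.

Definition mpoly3 := {poly {poly {poly algC}}}.

Definition mC (c : algC) : mpoly3 := c%:P%:P%:P.

Definition X1 : mpoly3 := 'X%:P%:P.
Definition X2 : mpoly3 := 'X%:P.
Definition X3 : mpoly3 := 'X.

Definition Xv (i : 'I_3) : mpoly3 :=
  match val i with 0%N => X1 | 1%N => X2 | _ => X3 end.

(* coefficient of X1^k1 X2^k2 X3^k3 *)
Definition coef3 (p : mpoly3) (k1 k2 k3 : nat) : algC := p`_k3`_k2`_k1.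

Definition expo (j : 'I_3) (k1 k2 k3 : nat) : nat :=
  match val j with 0%N => k1 | 1%N => k2 | _ => k3 end.

(* total degree (total degree of 0 is set to 0) *)
Definition tdeg2 (q : {poly {poly algC}}) : nat :=
  \max_(i < size q | (q`_i != 0)%R) (i + (size (q`_i)%R).-1)%N.
Definition tdeg (p : mpoly3) : nat :=
  \max_(i < size p | (p`_i != 0)%R) (i + tdeg2 (p`_i)%R)%N.

Definition subst3 (p : mpoly3) (g1 g2 g3 : mpoly3) : mpoly3 :=
  \sum_(i < size p) \sum_(j < size p`_i) \sum_(k < size p`_i`_j)
     mC (p`_i`_j`_k) * g1 ^+ k * g2 ^+ j * g3 ^+ i.

Definition pmap3 := 'I_3 -> mpoly3.

Definition comp3 (F G : pmap3) : pmap3 :=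
  fun i => subst3 (F i) (G (inord 0)) (G (inord 1)) (G (inord 2)).

Definition mdeg (F : pmap3) : nat * nat * nat :=
  (tdeg (F (inord 0)), tdeg (F (inord 1)), tdeg (F (inord 2))).

Definition affine_inv (F : pmap3) : Prop :=
  exists (A : 'M[algC]_3) (b : 'I_3 -> algC), A \in unitmx /\
    forall i, F i = \sum_(j < 3) mC (A i j) * Xv j + mC (b i).

Definition elementary (F : pmap3) : Prop :=
  exists (j : 'I_3) (g : mpoly3),
    (forall k1 k2 k3, (0 < expo j k1 k2 k3)%N -> coef3 g k1 k2 k3 = 0) /\
    F j = Xv j + g /\ (forall i, i != j -> F i = Xv i).

Inductive tame : pmap3 -> Prop :=
  | tame_affine F : affine_inv F -> tame F
  | tame_elem F : elementary F -> tame F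
  | tame_comp F G : tame F -> tame G -> tame (comp3 F G).

(* Main.v *)
Require Import Defs.
From HB Require Import structures.
From mathcomp Require Import all_boot all_order all_algebra all_field.
From Stdlib Require Import Lia.
Set Implicit Arguments. Unset Strict Implicit. Unset Printing Implicit Defensive.
Import GRing.Theory.
Local Open Scope ring_scope.
Section Ev.
Variables g1 g2 g3 : mpoly3.

Let mCm : {rmorphism algC -> mpoly3} := (polyC \o polyC \o polyC).
Lemma cf1 : commr_rmorph mCm g1. Proof. by move=> x; apply: mulrC. Qed.
Let f1 : {rmorphism {poly algC} -> mpoly3} := horner_morph cf1.
Lemma cf2 : commr_rmorph f1 g2. Proof. by move=> x; apply: mulrC. Qed.
Let f2 : {rmorphism {poly {poly algC}} -> mpoly3} := horner_morph cf2.
Lemma cf3 : commr_rmorph f2 g3. Proof. by move=> x; apply: mulrC. Qed.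
Definition ev : {rmorphism mpoly3 -> mpoly3} := horner_morph cf3.

Lemma hm_wide (aR : nzRingType) (f : {rmorphism aR -> mpoly3}) u
   (cfu : commr_rmorph f u) p :
  horner_morph cfu p = \sum_(i < size p) f p`_i * u ^+ i.
Proof.
rewrite /horner_morph (@horner_coef_wide _ (size p)).
  by apply: eq_bigr => i _; rewrite coef_map.
by rewrite /map_poly size_poly.
Qed.

Lemma subst3E p : subst3 p g1 g2 g3 = ev p.
Proof.
rewrite /ev /= (hm_wide cf3) /subst3; apply: eq_bigr => i _.
rewrite /f2 /= (hm_wide cf2) big_distrl /=; apply: eq_bigr => j _.
rewrite /f1 /= (hm_wide cf1) !big_distrl /=; apply: eq_bigr => k _.
by rewrite /mC /mCm.
Qed.

Lemma evX1 : ev X1 = g1.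
Proof. by rewrite /ev /X1 /= (horner_morphC cf3) /f2 /= (horner_morphC cf2) /f1 /= (horner_morphX cf1). Qed.
Lemma evX2 : ev X2 = g2.
Proof. by rewrite /ev /X2 /= (horner_morphC cf3) /f2 /= (horner_morphX cf2). Qed.
Lemma evX3 : ev X3 = g3.
Proof. by rewrite /ev /X3 /= (horner_morphX cf3). Qed.
End Ev.
Record graded (R : nzSemiRingType) (G : nat -> R -> Prop) := Graded {
  g0 : forall d, G d 0;
  gadd : forall d x y, G d x -> G d y -> G d (x + y);
  gmono : forall d e x, (d <= e)%N -> G d x -> G e x;
  gmul : forall d e x y, G d x -> G e y -> G (d + e)%N (x * y);
  g1 : G 0%N 1 }.

Definition Gp (R : nzSemiRingType) (G : nat -> R -> Prop) (d : nat) (p : {poly R}) :=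
  forall i, if (i <= d)%N then G (d - i)%N p`_i else p`_i = 0.

Lemma arith1 d e i k : (k <= i)%N -> (i <= d+e)%N -> (i - k <= e)%N -> (k <= d)%N ->
  (d + e - i = d - k + (e - (i - k)))%N.
Proof. move=> /leP h1 /leP h2 /leP h3 /leP h4. rewrite -?minusE -?plusE in h1 h2 h3 h4 *. lia. Qed.
Lemma arith2 d e i k : (k <= i)%N -> (d + e < i)%N -> (i - k <= e)%N -> (k <= d)%N -> False.
Proof. move=> /leP h1 /ltP h2 /leP h3 /leP h4. rewrite -?minusE -?plusE in h1 h2 h3 h4 *. lia. Qed.

Section Lift.
Variables (R : nzSemiRingType) (G : nat -> R -> Prop) (gG : graded G).

Lemma Gp_graded : graded (Gp G).
Proof.
split.
- by move=> d i; rewrite coef0; case: ifP => _ //; apply: g0.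
- move=> d x y hx hy i; rewrite coefD; move: (hx i) (hy i); case: ifP => _.
    exact: gadd.
  by move=> -> ->; rewrite addr0.
- move=> d e x hde hx i; move: (hx i); case: (leqP i d) => hid.
    rewrite (leq_trans hid hde); apply: gmono => //; exact: leq_sub2r.
  by move=> ->; case: ifP => _ //; apply: g0.
- move=> d e x y hx hy i; rewrite coefM.
  have key : forall k : 'I_i.+1, x`_k * y`_(i - k)%N = 0 \/
      [/\ (k <= d)%N, ((i - k)%N <= e)%N & G (d - k + (e - (i - k)))%N (x`_k * y`_(i - k)%N)].
    move=> k; move: (hx k) (hy (i - k)%N).
    case: (leqP (nat_of_ord k) d) => hk; last by move=> -> _; left; rewrite mul0r.
    case: (leqP (i - k)%N e) => hk2; last by move=> _ ->; left; rewrite mulr0.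
    by move=> h1 h2; right; split => //; apply: gmul.
  case: (leqP i (d + e)) => hi.
    apply: (big_ind (G (d + e - i)%N)); [exact: g0 | exact: gadd |].
    move=> k _; case: (key k) => [-> | [h1 h2 h3]]; first exact: g0.
    have kle : (k <= i)%N by rewrite -ltnS.
    suff -> : (d + e - i = d - k + (e - (i - k)))%N by [].
    exact: arith1.
  apply: big1 => k _; case: (key k) => [// | [h1 h2 h3]].
  have kle : (k <= i)%N by rewrite -ltnS.
  exfalso; exact: (arith2 kle hi h2 h1).
- move=> i; rewrite coef1; case: i => [|i] //=; exact: g1.
Qed.

Lemma Gp_C d c : G d c -> Gp G d c%:P.
Proof.
move=> h i; rewrite coefC; case: i => [|i] /=; first by rewrite subn0.
by case: ifP => _ //; apply: g0.
Qed.

Lemma Gp_X : Gp G 1 'X.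
Proof.
move=> [|[|i]] /=; rewrite coefX //=; first exact: g0; exact: g1.
Qed.
End Lift.

Lemma gexp (R : nzSemiRingType) (G : nat -> R -> Prop) (gG : graded G) d x n :
  G d x -> G (n * d)%N (x ^+ n).
Proof.
move=> h; elim: n => [|n IH]; first by rewrite expr0 mul0n; apply: g1.
by rewrite exprS mulSn; apply: gmul.
Qed.

Definition G0 (d : nat) (x : algC) := True.
Lemma G0_graded : graded G0. Proof. by split. Qed.
Definition G1 := Gp G0.
Definition G2 := Gp G1.
Definition G3 := Gp G2.
Lemma G1g : graded G1. Proof. exact: Gp_graded G0_graded. Qed.
Lemma G2g : graded G2. Proof. exact: Gp_graded G1g. Qed.
Lemma G3g : graded G3. Proof. exact: Gp_graded G2g. Qed.

Lemma G3X1 : G3 1 X1.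
Proof. rewrite /X1 /G3; apply: (@Gp_C _ G2 G2g); apply: (@Gp_C _ G1 G1g); exact: Gp_X G0_graded. Qed.
Lemma G3X2 : G3 1 X2.
Proof. rewrite /X2 /G3; apply: (@Gp_C _ G2 G2g); exact: Gp_X G1g. Qed.
Lemma G3X3 : G3 1 X3.
Proof. exact: Gp_X G2g. Qed.

Lemma G1size d r : G1 d r -> (size r <= d.+1)%N.
Proof.
move=> h; apply/leq_sizeP => j hj; move: (h j).
by rewrite leqNgt hj.
Qed.

Lemma tdeg2_le d q : G2 d q -> (tdeg2 q <= d)%N.
Proof.
move=> h; apply/bigmax_leqP => i nz; move: (h i); case: leqP => hi.
  move/G1size => hs; rewrite -(subnKC hi) leq_add2l.
  by move: hs; case: (size (q`_i)%R).
by move=> e; rewrite e eqxx in nz.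
Qed.

Lemma tdeg_le d p : G3 d p -> (tdeg p <= d)%N.
Proof.
move=> h; apply/bigmax_leqP => i nz; move: (h i); case: leqP => hi.
  by move/tdeg2_le => hs; rewrite -(subnKC hi) leq_add2l.
by move=> e; rewrite e eqxx in nz.
Qed.

Lemma tdeg_ge c (p : mpoly3) : p`_c != 0 -> (c <= tdeg p)%N.
Proof.
move=> nz; have hc : (c < size p)%N.
  by rewrite ltnNge; apply/negP => hs; move: nz; rewrite nth_default ?eqxx.
apply: leq_trans (leq_bigmax_cond (Ordinal hc) nz); exact: leq_addr.
Qed.
Lemma repr_ab a b c : (0 < a)%N -> coprime a b -> ((a - 1) * (b - 1) <= c)%N ->
  exists i j, c = (i * a + j * b)%N.
Proof.
move=> a0 cop hc.
have [u _ hu] := Bezoutl b a0.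
rewrite (eqP cop) in hu.
set j0 := (c * (a - 1) * u)%N.
have h1 : (a %| c * (a - 1) + j0 * b)%N.
  have -> : (c * (a - 1) + j0 * b = c * (a - 1) * (1 + u * b))%N.
    by rewrite mulnDr muln1 /j0 !mulnA.
  exact: dvdn_mull.
have h2 : (a %| c * (a - 1) + c)%N.
  have -> : (c * (a - 1) + c = c * a)%N.
    by rewrite -{2}(muln1 c) -mulnDr subnK.
  exact: dvdn_mull (dvdnn a).
have h3 : (j0 * b == c %[mod a])%N.
  rewrite -(eqn_modDl (c * (a - 1))).
  by move: h1 h2; rewrite /dvdn => /eqP -> /eqP ->.
set j := (j0 %% a)%N.
have hj : (j < a)%N by rewrite ltn_mod.
have h4 : (j * b == c %[mod a])%N by rewrite /j modnMml.
have hjb : (j * b <= c)%N.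
  rewrite leqNgt; apply/negP => hlt.
  move: h4; rewrite (eqn_mod_dvd _ (ltnW hlt)) => hd.
  have pos : (0 < j * b - c)%N by rewrite subn_gt0.
  have := dvdn_leq pos hd.
  have x4 : (j * b <= (a - 1) * b)%N by rewrite leq_mul2r -ltnS subn1 prednK // hj orbT.
  have x5 : ((a - 1) * b <= (a - 1) * (b - 1) + (a - 1))%N.
    case: (b) => [|b']; first by rewrite muln0.
    by rewrite mulnS addnC -[b'.+1]addn1 addnK.
  move=> x6.
  move: hc hlt x4 x5 x6.
  generalize ((a - 1) * b)%N ((a - 1) * (b - 1))%N (j * b)%N => m1 m2 jb.
  move=> /leP y1 /ltP y2 /leP y3 /leP y4 /leP y5.
  rewrite -?minusE -?plusE in y1 y2 y3 y4 y5. lia.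
exists ((c - j * b) %/ a)%N, j.
rewrite divnK ?subnK //.
by rewrite -eqn_mod_dvd // eq_sym.
Qed.
Definition elem (j : 'I_3) (g : mpoly3) : pmap3 :=
  fun i => if i == j then Xv i + g else Xv i.

Lemma elemP j g : (forall k1 k2 k3, (0 < expo j k1 k2 k3)%N -> coef3 g k1 k2 k3 = 0) ->
  elementary (elem j g).
Proof.
move=> h; exists j, g; split => //; split; first by rewrite /elem eqxx.
by move=> i /negbTE hi; rewrite /elem hi.
Qed.

Lemma i0 : (inord 0 : 'I_3) = ord0. Proof. by apply: ord_inj; rewrite inordK. Qed.
Lemma i1 : nat_of_ord (inord 1 : 'I_3) = 1%N. Proof. by rewrite inordK. Qed.
Lemma i2 : nat_of_ord (inord 2 : 'I_3) = 2%N. Proof. by rewrite inordK. Qed.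
Lemma i0v : nat_of_ord (inord 0 : 'I_3) = 0%N. Proof. by rewrite inordK. Qed.

Lemma o1 : (inord 1 : 'I_3) = @Ordinal 3 1 isT. Proof. by apply: ord_inj; rewrite inordK. Qed.
Lemma o2 : (inord 2 : 'I_3) = @Ordinal 3 2 isT. Proof. by apply: ord_inj; rewrite inordK. Qed.
Lemma Xv0 : Xv (inord 0) = X1. Proof. by rewrite i0. Qed.
Lemma Xv1 : Xv (inord 1) = X2. Proof. by rewrite o1. Qed.
Lemma Xv2 : Xv (inord 2) = X3. Proof. by rewrite o2. Qed.

Lemma ne01 : ((inord 0 : 'I_3) == inord 1) = false. Proof. by rewrite -(inj_eq (@ord_inj 3)) i0v i1. Qed.
Lemma ne02 : ((inord 0 : 'I_3) == inord 2) = false. Proof. by rewrite -(inj_eq (@ord_inj 3)) i0v i2. Qed.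
Lemma ne12 : ((inord 1 : 'I_3) == inord 2) = false. Proof. by rewrite -(inj_eq (@ord_inj 3)) i1 i2. Qed.
Lemma ne10 : ((inord 1 : 'I_3) == inord 0) = false. Proof. by rewrite eq_sym ne01. Qed.
Lemma ne20 : ((inord 2 : 'I_3) == inord 0) = false. Proof. by rewrite eq_sym ne02. Qed.
Lemma ne21 : ((inord 2 : 'I_3) == inord 1) = false. Proof. by rewrite eq_sym ne12. Qed.

Lemma coefX3n n k1 k2 k3 : (0 < k1 + k2)%N -> coef3 (X3 ^+ n) k1 k2 k3 = 0.
Proof.
move=> h; rewrite /coef3 /X3 coefXn; case: (k3 == n) => /=; last by rewrite !coef0.
rewrite coef1; case: k2 h => [|k2] /= h; last by rewrite coef0.
by rewrite coef1; case: k1 h.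
Qed.

Lemma coefconst (q : {poly {poly algC}}) k1 k2 k3 : (0 < k3)%N -> coef3 q%:P k1 k2 k3 = 0.
Proof. by move=> h; rewrite /coef3 coefC; case: k3 h => //= k3 _; rewrite !coef0. Qed.

Lemma tdeg_lin (q : {poly {poly algC}}) n : G3 1 q%:P -> (0 < n)%N ->
  tdeg (q%:P + X3 ^+ n) = n.
Proof.
move=> hq hn; apply/eqP; rewrite eqn_leq; apply/andP; split.
  apply: tdeg_le; apply: (gadd G3g); first exact: (gmono G3g hn).
  by have := gexp G3g n G3X3; rewrite muln1.
apply: tdeg_ge; rewrite coefD coefC /X3 coefXn eqxx.
by case: n hn => // n _ /=; rewrite add0r oner_neq0.
Qed.

Lemma tdeg_top i j a b : (0 < a)%N -> (0 < b)%N -> (1 < i * a + j * b)%N ->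
  tdeg (X3 + (X1 + X3 ^+ a) ^+ i * (X2 + X3 ^+ b) ^+ j) = (i * a + j * b)%N.
Proof.
move=> ha hb hc.
have GA : G3 a (X1 + X3 ^+ a).
  apply: (gadd G3g); first exact: (gmono G3g ha G3X1).
  by have := gexp G3g a G3X3; rewrite muln1.
have GB : G3 b (X2 + X3 ^+ b).
  apply: (gadd G3g); first exact: (gmono G3g hb G3X2).
  by have := gexp G3g b G3X3; rewrite muln1.
apply/eqP; rewrite eqn_leq; apply/andP; split.
  apply: tdeg_le; apply: (gadd G3g); first exact: (gmono G3g (ltnW hc) G3X3).
  by apply: (gmul G3g); apply: (gexp G3g).
apply: tdeg_ge.
set A := X1 + X3 ^+ a; set B := X2 + X3 ^+ b.
have mA : A \is monic by rewrite /A addrC /X3 /X1; apply: monicXnaddC.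
have mB : B \is monic by rewrite /B addrC /X3 /X2; apply: monicXnaddC.
have sA : size A = a.+1 by rewrite /A addrC /X3 /X1; apply: size_XnaddC.
have sB : size B = b.+1 by rewrite /B addrC /X3 /X2; apply: size_XnaddC.
have mAi : A ^+ i \is monic by apply: monic_exp.
have mBj : B ^+ j \is monic by apply: monic_exp.
have mm : A ^+ i * B ^+ j \is monic by rewrite monicMl.
have sm : (size (A ^+ i * B ^+ j)).-1 = (i * a + j * b)%N.
  rewrite size_mul ?monic_neq0 //.
  have e1 := size_exp A i; have e2 := size_exp B j.
  rewrite sA /= in e1; rewrite sB /= in e2.
  have p1 : (0 < size (A ^+ i))%N by rewrite size_poly_gt0 monic_neq0.
  have p2 : (0 < size (B ^+ j))%N by rewrite size_poly_gt0 monic_neq0.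
  rewrite -(prednK p1) -(prednK p2) e1 e2 addSn addnS /= [(a * i)%N]mulnC [(b * j)%N]mulnC.
  done.
rewrite coefD /X3 coefX -sm -lead_coefE (monicP mm) sm.
by case: (i * a + j * b)%N hc => [|[|k]] //= _; rewrite add0r oner_neq0.
Qed.

Theorem fact2 (a b c : nat) :
  (2 < a)%N -> (a < b)%N -> coprime a b -> ((a - 1) * (b - 1) <= c)%N ->
  exists F : pmap3, tame F /\ mdeg F = (a, b, c).
Proof.
move=> ha hab cop hc.
have a0 : (0 < a)%N by apply: leq_trans ha.
have b0 : (0 < b)%N by apply: leq_trans hab.
have [i [j ec]] := repr_ab a0 cop hc.
have c1 : (1 < i * a + j * b)%N.
  rewrite -ec; apply: leq_trans hc.
  have h2 : (2 <= a - 1)%N by rewrite leq_subRL ?(ltnW a0) // addn1 ha.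
  have h2b : (2 < b)%N by apply: ltn_trans ha hab.
  have h3 : (1 <= b - 1)%N by rewrite leq_subRL // addn1 ltnW.
  exact: leq_trans h2 (leq_pmulr _ h3).
pose E1 := elem (inord 0) (X3 ^+ a).
pose E2 := elem (inord 1) (X3 ^+ b).
pose H := elem (inord 2) (X1 ^+ i * X2 ^+ j).
exists (comp3 H (comp3 E1 E2)); split.
  apply: tame_comp; last apply: tame_comp; apply: tame_elem; apply: elemP.
  - move=> k1 k2 k3; rewrite o2 /= => h.
    have -> : X1 ^+ i * X2 ^+ j = ((('X : {poly algC})%:P) ^+ i * 'X ^+ j)%:P.
      by rewrite rmorphM !rmorphXn.
    exact: coefconst.
  - by move=> k1 k2 k3; rewrite i0 /= => h; apply: coefX3n; rewrite addn_gt0 h.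
  - by move=> k1 k2 k3; rewrite o1 /= => h; apply: coefX3n; rewrite addn_gt0 h orbT.
have G0e : comp3 E1 E2 (inord 0) = X1 + X3 ^+ a.
  rewrite /comp3 /E1 /E2 /elem ?eqxx ?ne01 ?ne02 ?ne12 ?ne10 ?ne20 ?ne21 ?Xv0 ?Xv1 ?Xv2 subst3E.
  by rewrite rmorphD rmorphXn evX1 evX3.
have G1e : comp3 E1 E2 (inord 1) = X2 + X3 ^+ b.
  rewrite /comp3 /E1 /E2 /elem ?eqxx ?ne01 ?ne02 ?ne12 ?ne10 ?ne20 ?ne21 ?Xv0 ?Xv1 ?Xv2 subst3E.
  by rewrite evX2.
have G2e : comp3 E1 E2 (inord 2) = X3.
  rewrite /comp3 /E1 /E2 /elem ?eqxx ?ne01 ?ne02 ?ne12 ?ne10 ?ne20 ?ne21 ?Xv0 ?Xv1 ?Xv2 subst3E.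
  by rewrite evX3.
have Fe k : comp3 H (comp3 E1 E2) k = subst3 (H k) (X1 + X3 ^+ a) (X2 + X3 ^+ b) X3.
  by rewrite -G0e -G1e -G2e.
rewrite /mdeg !Fe /H /elem ?eqxx ?ne01 ?ne02 ?ne12 ?ne10 ?ne20 ?ne21 ?Xv0 ?Xv1 ?Xv2 !subst3E.
rewrite evX1 evX2 rmorphD rmorphM !rmorphXn evX1 evX2 evX3.
rewrite /X1 tdeg_lin; last by [] ; last by rewrite -/X1; exact: G3X1.
rewrite /X2 tdeg_lin; last exact: b0 ; last by rewrite -/X2; exact: G3X2.
by rewrite -/X1 -/X2 ec tdeg_top.
Qed.
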